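(* Let $X$ be a partial design graph with parameters $(m,d,c_1,c_2)$, and let $Y$ be its $c_1$-graph. Then: (i) $Y$ is regular of degree $$d'=\frac{d(d-1)-(m-1)c_2}{c_1-c_2};$$ (ii) if $\alpha_1'=d',\alpha_2',\dots,\alpha_m'$ are the adjacency eigenvalues of $Y$ (with multiplicity), then the adjacency eigenvalues of $X$, with multiplicity, are $$\pm d,\qquad \pm\sqrt{(d-c_2)+(c_1-c_2)\alpha_k'}\quad (k=2,\dots,m).$$
   Context: A partial design graph is a finite, simple, connected, regular bipartite graph with $m$ vertices of each colour and degree $d$ such that the number of common neighbours of two distinct vertices of the same colour takes exactly two values $c_1\neq c_2$. Its $c_1$-graph is the (possibly disconnected) graph whose vertices are the $m$ vertices of one fixed colour (the black vertices), two of them being adjacent if and only if they have exactly $c_1$ common neighbours in $X$. Adjacency eigenvalues are eigenvalues of the adjacency matrix. *)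

(* Defs.v *)
From mathcomp Require Import all_boot all_order all_algebra all_field.
Set Implicit Arguments. Unset Strict Implicit. Unset Printing Implicit Defensive.
Import Order.TTheory GRing.Theory Num.Theory.
Local Open Scope ring_scope.

(* A bipartite graph with m black vertices ('I_m) and m white vertices ('I_m)
   is given by its incidence relation N : black -> white -> bool
   (N b w  <=>  black b is adjacent to white w). *)

Section PDG.
Variable m : nat.
Variable N : rel 'I_m.

(* Vertex set of X: black vertices (inl) and white vertices (inr). *)
Definition Xvert := ('I_m + 'I_m)%type.

Definition Xadj : rel Xvert := fun x y =>
  match x, y with
  | inl b, inr w => N b w
  | inr w, inl b => N b w
  | _, _ => false
  end.

Definition black_deg (b : 'I_m) : nat := #|[set w | N b w]|.
Definition white_deg (w : 'I_m) : nat := #|[set b | N b w]|.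

Definition cn_black (b b' : 'I_m) : nat := #|[set w | N b w && N b' w]|.
Definition cn_white (w w' : 'I_m) : nat := #|[set b | N b w && N b w']|.

Definition partial_design_graph (d c1 c2 : nat) : Prop :=
  [/\ (forall x y : Xvert, connect Xadj x y),
      (forall b, black_deg b = d) /\ (forall w, white_deg w = d),
      c1 <> c2,
      (forall b b', b != b' -> cn_black b b' = c1 \/ cn_black b b' = c2) /\
      (forall w w', w != w' -> cn_white w w' = c1 \/ cn_white w w' = c2)
    &
      (forall c, c = c1 \/ c = c2 ->
        (exists b b', b != b' /\ cn_black b b' = c) \/
        (exists w w', w != w' /\ cn_white w w' = c))].

Definition Yadj (c1 : nat) : rel 'I_m := fun b b' =>
  (b != b') && (cn_black b b' == c1).

Definition adjY (c1 : nat) : 'M[algC]_m :=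
  \matrix_(i, j) ((Yadj c1 i j)%:R).

Definition adjX : 'M[algC]_(m + m) :=
  \matrix_(i, j) ((Xadj (split i) (split j))%:R).

End PDG.

(* Main.v *)
Require Import Defs.
From mathcomp Require Import all_boot all_order all_algebra all_field.
From mathcomp Require Import ring.
Import Order.TTheory GRing.Theory Num.Theory.
Local Open Scope ring_scope.

Lemma char_poly_col0 n (Z : 'M[algC]_n.+1) k :
  (forall i, Z i 0 = (i == 0)%:R * k) ->
  char_poly Z = ('X - k%:P) * char_poly (row' 0 (col' 0 Z)).
Proof.
move=> HZ; rewrite /char_poly (expand_det_col _ 0) (bigD1 0) //= big1 ?addr0.
  rewrite /cofactor row'_col'_char_poly_mx !mxE eqxx HZ eqxx mul1r addn0 expr0 mul1r.
  by [].
move=> i Hi; rewrite !mxE HZ (negPf Hi) mul0r /=.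
by rewrite mulr0n sub0r oppr0 mul0r.
Qed.

Lemma char_poly_sim n (P Q A : 'M[algC]_n) : Q *m P = 1%:M ->
  char_poly (Q *m A *m P) = char_poly A.
Proof.
move=> HQP; rewrite /char_poly.
have QP' : map_mx (@polyC algC) Q *m map_mx polyC P = 1%:M.
  by rewrite -map_mxM HQP map_mx1.
have -> : char_poly_mx (Q *m A *m P) =
   map_mx polyC Q *m char_poly_mx A *m map_mx polyC P.
  rewrite /char_poly_mx mulmxBr mulmxBl mul_mx_scalar -scalemxAl -!map_mxM HQP.
  by rewrite map_mx1 scalemx1.
by rewrite !det_mulmx mulrAC -det_mulmx QP' det1 mul1r.
Qed.

Lemma char_poly_affine n (D : 'M[algC]_n) (a b : algC) (s : seq algC) : b != 0 ->
  char_poly D = \prod_(x <- s) ('X - x%:P) -> size s = n ->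
  char_poly (a%:M + b *: D) = \prod_(x <- s) ('X - (a + b * x)%:P).
Proof.
move=> b0 HD Hs; set q : {poly algC} := b^-1 *: ('X - a%:P).
have E : char_poly_mx (a%:M + b *: D) = b%:P *: map_mx (comp_poly q) (char_poly_mx D).
  apply/matrixP => i j; rewrite !mxE.
  case: (i == j) => /=.
    rewrite rmorphB /= comp_polyX comp_polyC /q.
    rewrite -mul_polyC !mulr1n mulrBr mulrA -polyCM mulfV // mul1r polyCD polyCM.
    by rewrite opprD addrA.
  rewrite !mulr0n rmorphB /= comp_polyC rmorph0 !sub0r polyCD polyCM.
  by rewrite comp_polyC add0r mulrN.
rewrite /char_poly E detZ det_map_mx -/(char_poly D) HD rmorph_prod /= -Hs.
elim: s {HD Hs} => [|x s IH]; first by rewrite !big_nil expr0 mulr1.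
rewrite !big_cons exprS -IH mulrACA; congr (_ * _).
rewrite rmorphB /= comp_polyX comp_polyC /q -mul_polyC mulrBr mulrA -polyCM mulfV //.
by rewrite mul1r polyCD polyCM opprD addrA.
Qed.


Lemma spec_rank1 n (A M : 'M[algC]_n.+1) (a b c k l : algC) (al : seq algC) :
  b != 0 ->
  M = a%:M + b *: A + c *: ((const_mx 1 : 'cV_n.+1) *m (const_mx 1 : 'cV_n.+1)^T) ->
  A *m (const_mx 1 : 'cV_n.+1) = k *: const_mx 1 ->
  M *m (const_mx 1 : 'cV_n.+1) = l *: const_mx 1 ->
  size al = n.+1 -> char_poly A = \prod_(x <- al) ('X - x%:P) -> al`_0 = k ->
  char_poly M = ('X - l%:P) * \prod_(x <- behead al) ('X - (a + b * x)%:P).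
Proof.
set u : 'cV[algC]_n.+1 := const_mx 1.
move=> b0 HM HA HMu Hs HcA Hk.
set E : 'M[algC]_n.+1 := \matrix_(i,j) ((j == 0) && (i != 0))%:R.
have EE : E *m E = 0.
  apply/matrixP=> i j; rewrite !mxE big1 // => k' _; rewrite /E !mxE.
  by case Hk': (k' == 0); rewrite /= ?mul0r // andbF mulr0.
set Q := 1%:M - E; set P := 1%:M + E.
have QP : Q *m P = 1%:M.
  by rewrite /Q /P mulmxBl mul1mx mulmxDr mulmx1 EE addr0 addrK.
have Pu : forall B : 'M_n.+1, forall i, (B *m P) i 0 = (B *m u) i 0.
  move=> B i; rewrite !mxE; apply: eq_bigr => j _; rewrite !mxE.
  by case Hj: (j == 0); rewrite /= ?mulr1n ?mulr0n ?addr0 ?add0r // (eqP Hj).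
have Qu : forall i, (Q *m u) i 0 = (i == 0)%:R.
  move=> i; rewrite /Q mulmxBl mul1mx /u /E !mxE.
  rewrite (bigD1 0) //= big1 ?addr0; last first.
    by move=> j /negPf Hj; rewrite !mxE Hj mul0r.
  rewrite !mxE eqxx /= mulr1.
  by case: (i == 0); rewrite /= ?subrr ?subr0.
have col0 : forall (B : 'M_n.+1) l', B *m u = l' *: u ->
    forall i, (Q *m B *m P) i 0 = (i == 0)%:R * l'.
  move=> B l' HB i; rewrite Pu -mulmxA HB -scalemxAr mxE Qu mulrC.
  by [].
have cA := @char_poly_col0 n _ _ (col0 _ _ HA).
have cM := @char_poly_col0 n _ _ (col0 _ _ HMu).
rewrite char_poly_sim // in cA; rewrite char_poly_sim // in cM.
rewrite cM; congr (_ * _).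
set D := row' 0 (col' 0 (Q *m A *m P)).
case: al Hs HcA Hk => [//|k' be] /= [Hs] HcA Hk; subst k'.
have cD : char_poly D = \prod_(x <- be) ('X - x%:P).
  apply: (@mulfI _ ('X - k%:P)); first by rewrite polyXsubC_eq0.
  by rewrite -cA HcA big_cons.
rewrite -(@char_poly_affine _ _ a _ _ b0 cD Hs); congr char_poly.
have W0 : forall i j, (Q *m (u *m u^T) *m P) (lift 0 i) j = 0.
  move=> i j; rewrite mulmxA -(mulmxA (Q *m u)) mxE big_ord1 Qu.
  by rewrite eq_sym (negPf (neq_lift 0 i)) mul0r.
clearbody Q P.
rewrite HM !mulmxDr !mulmxDl mul_mx_scalar -!scalemxAr -!scalemxAl QP.
have W0' : row' 0 (col' 0 (Q *m (u *m u^T) *m P)) = 0.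
  apply/matrixP => i j; rewrite [RHS]mxE -(W0 i (lift 0 j)).
  by rewrite !mxE.
have I0 : row' 0 (col' 0 (1%:M : 'M[algC]_n.+1)) = 1%:M.
  by apply/matrixP => i j; rewrite !mxE (inj_eq lift_inj).
rewrite !linearD !linearZ /= W0' I0 scaler0 addr0.
by rewrite scalemx1.
Qed.

Lemma char_poly_bip n (Nm : 'M[algC]_n) :
  char_poly (block_mx 0 Nm Nm^T 0) = char_poly (Nm *m Nm^T) \Po 'X^2.
Proof.
set C := char_poly_mx (block_mx 0 Nm Nm^T 0).
have EC : C = block_mx ('X%:M) (- map_mx polyC Nm) (- map_mx polyC Nm^T) ('X%:M).
  rewrite /C /char_poly_mx map_block_mx !map_mx0 (scalar_mx_block n n).
  by rewrite opp_block_mx add_block_mx !oppr0 !addr0 !add0r.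
set R := block_mx ('X%:M) 0 (map_mx polyC Nm^T) ('X%:M) : 'M[{poly algC}]_(n + n).
have ER : C *m R = block_mx (('X^2)%:M - map_mx polyC (Nm *m Nm^T))
                        (-('X *: map_mx polyC Nm)) 0 (('X^2)%:M).
  rewrite EC /R mulmx_block !mulmx0.
  congr block_mx.
  - by rewrite -scalar_mxM -expr2 mulNmx map_mxM.
  - by rewrite add0r mulNmx mul_mx_scalar.
  - by rewrite mulNmx mul_mx_scalar mul_scalar_mx addNr.
  - by rewrite add0r -scalar_mxM -expr2.
have H := congr1 determinant ER.
rewrite det_mulmx det_ublock det_lblock !det_scalar in H.
rewrite /char_poly -/C.
apply: (@mulIf _ ('X ^+ n * 'X ^+ n)).
  by rewrite mulf_neq0 // expf_neq0 // polyX_eq0.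
rewrite H -exprM mulnC exprM expr2; congr (_ * _).
rewrite -det_map_mx; congr (\det _).
apply/matrixP => i j; rewrite !mxE rmorphB /= comp_polyC rmorphMn /= comp_polyX.
by [].
Qed.

Lemma sum_card (T : finType) (P : pred T) :
  \sum_j ((P j)%:R : algC) = (#|[set j | P j]|)%:R.
Proof.
rewrite -sum1_card natr_sum [RHS]big_mkcond /=; apply: eq_bigr => j _.
by rewrite inE; case: (P j).
Qed.

Lemma adjX_block n (N : rel 'I_n) :
  adjX N = block_mx 0 (\matrix_(i, j) ((N i j)%:R : algC)) (\matrix_(i, j) ((N i j)%:R : algC))^T 0.
Proof.
apply/matrixP => i j; rewrite !mxE.
case: (split i) => i'; rewrite !mxE; case: (split j) => j'; rewrite !mxE //.
Qed.

Theorem mainTheorem17 (m : nat) (N : rel 'I_m) (d c1 c2 : nat) :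
  partial_design_graph N d c1 c2 ->
  let d' : algC := ((d * (d - 1))%:R - (m - 1)%:R * c2%:R) / (c1%:R - c2%:R) in
  (* (i) Y is regular of degree d' *)
  (forall b : 'I_m, (#|[set b' | Yadj N c1 b b']|)%:R = d') /\
  (* (ii) eigenvalues with multiplicity *)
  (forall alpha : seq algC,
     size alpha = m ->
     char_poly (adjY N c1) = \prod_(a <- alpha) ('X - a%:P) ->
     alpha`_0 = d' ->
     char_poly (adjX N) =
       ('X - d%:R%:P) * ('X + d%:R%:P) *
       \prod_(a <- behead alpha)
          (('X - (sqrtC ((d%:R - c2%:R) + (c1%:R - c2%:R) * a))%:P) *
           ('X + (sqrtC ((d%:R - c2%:R) + (c1%:R - c2%:R) * a))%:P))).
Proof.
case: m N => [|n] N H.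
  case: H => _ _ _ _ Hex.
  by case: (Hex c1 (or_introl erefl)) => [[[i Hi] _]|[[i Hi] _]].
move: H => [_ [Hbd Hwd] Hc12 [Hcb _] _] d'.
set Nm : 'M[algC]_n.+1 := \matrix_(i, j) (N i j)%:R.
set u : 'cV[algC]_n.+1 := const_mx 1.
set A := adjY N c1.
set M := Nm *m Nm^T.
set a : algC := d%:R - c2%:R.
set bb : algC := c1%:R - c2%:R.
set c : algC := c2%:R.
have bb0 : bb != 0 by rewrite /bb subr_eq0 eqr_nat; apply/eqP.
have HNu : Nm *m u = d%:R *: u.
  apply/matrixP => i j; rewrite !mxE mulr1.
  under eq_bigr do rewrite !mxE mulr1.
  by rewrite sum_card -(Hbd i).
have HNTu : Nm^T *m u = d%:R *: u.
  apply/matrixP => i j; rewrite !mxE mulr1.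
  under eq_bigr do rewrite !mxE mulr1.
  by rewrite sum_card -(Hwd i).
have HMu : M *m u = (d%:R * d%:R) *: u.
  by rewrite /M -mulmxA HNTu -scalemxAr HNu scalerA.
have HM : M = a%:M + bb *: A + c *: (u *m u^T).
  apply/matrixP => i j; rewrite !mxE big_ord1 !mxE mulr1.
  have -> : \sum_k (Nm i k * Nm^T k j) = (cn_black N i j)%:R.
    rewrite -sum_card; apply: eq_bigr => k _; rewrite !mxE -natrM.
    by case: (N i k); case: (N j k).
  rewrite mulr1 /Yadj.
  case: (eqVneq i j) => [<-|Hij].
    have -> : cn_black N i i = d.
      rewrite -(Hbd i) /cn_black /black_deg.
      by apply: eq_card => w; rewrite !inE andbb.
    by rewrite /= mulr0 addr0 mulr1n /a /c subrK.
  rewrite /= mulr0n add0r.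
  case: (Hcb i j Hij) => ->; first by rewrite eqxx /= mulr1 /bb /c subrK.
  have -> : (c2 == c1) = false by apply/eqP => E; apply: Hc12.
  by rewrite mulr0 add0r.
have HAu : A *m u = d' *: u.
  have uu : u^T *m u = (n.+1)%:R%:M.
    apply/matrixP => i j; rewrite !mxE (ord1 i) (ord1 j) /= mulr1n.
    under eq_bigr do rewrite !mxE mulr1.
    by rewrite sumr_const card_ord.
  move: HMu; rewrite HM !mulmxDl mul_scalar_mx -!scalemxAl -mulmxA uu mul_mx_scalar.
  rewrite scalerA => HMu'.
  have E1 : bb *: (A *m u) = (d%:R * d%:R - a - c * (n.+1)%:R) *: u.
    have gen : forall (X Y Z W : 'cV[algC]_n.+1), Y + X + Z = W -> X = W - Y - Z.
      by move=> X Y Z W <-; rewrite (addrAC _ (- Y)) addrK (addrC Y) addrK.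
    by rewrite (gen _ _ _ _ HMu') !scalerBl.
  have -> : A *m u = bb^-1 *: (bb *: (A *m u)) by rewrite scalerA mulVf // scale1r.
  rewrite E1 scalerA; congr (_ *: _).
  rewrite /d' mulrC; congr (_ * _).
  have Hdd : ((d * (d - 1))%:R : algC) = d%:R * d%:R - d%:R.
    clear; case: d => [|d0]; first by rewrite mul0n mulr0 subrr.
    rewrite natrM subn1 /= -addn1 natrD; ring.
  rewrite Hdd subn1 /= /a /c -addn1 natrD; ring.
split.
  move=> b; have := congr1 (fun B : 'cV[algC]_n.+1 => B b 0) HAu; rewrite /= !mxE mulr1 => <-.
  rewrite -sum_card; apply: eq_bigr => j _; rewrite !mxE mulr1 //.
move=> alpha Hs HcA H0.
have HcM := @spec_rank1 n A M a bb c d' (d%:R * d%:R) alpha bb0 HM HAu HMu Hs HcA H0.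
rewrite adjX_block char_poly_bip -/Nm -/M HcM rmorphM rmorph_prod /=.
congr (_ * _).
  rewrite rmorphB /= comp_polyX comp_polyC polyCM; ring.
apply: eq_bigr => x _.
rewrite rmorphB /= comp_polyX comp_polyC.
set y := a + bb * x.
by rewrite -{1}(sqrtCK y) expr2 polyCM; ring.
Qed.
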